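(* Consider SEMO on \textsc{LOTZ} with the Highest Diversity Contribution (HDC) parent selection, using as diversity measure either the crowding distance contribution or the hypervolume contribution with reference point $(-r,-r)$ for some $r\ge 1$. Then the expected time for finding the whole Pareto front is $O(n^2)$.
   Context: Search space $\{0,1\}^n$; objectives maximised. $\textsc{LOTZ}(x)=(\mathrm{LO}(x),\mathrm{TZ}(x))$, $\mathrm{LO}$ = number of leading ones, $\mathrm{TZ}$ = number of trailing zeros. Dominance: $y$ dominates $x$ if $f_i(y)\ge f_i(x)$ for all $i$, strictly for some $i$; weakly dominates if $\ge$ in all. Pareto set $X^*=\{1^i0^{n-i}:0\le i\le n\}$, front $F^*=f(X^* )$. SEMO with diversity-based parent selection: start with uniform random $s$, $P=\{s\}$. Each iteration: compute the diversity score of each $x\in P$ w.r.t. $P$; choose a parent by the selection mechanism; create $s'$ by flipping one uniformly random bit; if $s'$ is not dominated by any member of $P$, add it and remove all members weakly dominated by $s'$. Time = number of iterations until $f(P)=F^*$. HDC: always select an individual with the highest diversity score, ties broken uniformly at random. HVC with reference point $(r_1,r_2)$: sort population by increasing $f_1$ as $x_1,\dots,x_\mu$, set $f_1(x_0)=r_1$, $f_2(x_{\mu+1})=r_2$, $\mathrm{HVC}(x_i,P)=(f_1(x_i)-f_1(x_{i-1}))(f_2(x_i)-f_2(x_{i+1}))$. CDC: each point starts at 0; for each objective $m$, sort ascending by $f_m$, boundary points get $\infty$, intermediate $P[i]$ gets $+(f_m(P[i+1])-f_m(P[i-1]))/(f_m^{\max}-f_m^{\min})$, with $f_m^{\max},f_m^{\min}$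 the max and min values of objective $m$. *)

(* Defs.v *)
From HB Require Import structures.
From mathcomp Require Import all_boot all_order all_algebra.
Set Implicit Arguments. Unset Strict Implicit. Unset Printing Implicit Defensive.
Import Order.TTheory GRing.Theory Num.Theory.

Definition LO n (x : n.-tuple bool) : nat := find negb x.
Definition TZ n (x : n.-tuple bool) : nat := find id (rev x).
Definition fobj n (x : n.-tuple bool) : nat * nat := (LO x, TZ x).

Definition weakly_dominates n (y x : n.-tuple bool) : bool :=
  (LO x <= LO y)%N && (TZ x <= TZ y)%N.
Definition dominates n (y x : n.-tuple bool) : bool :=
  weakly_dominates y x && (fobj y != fobj x).

Definition Fstar (n : nat) : seq (nat * nat) := [seq (i, n - i)%N | i <- iota 0 n.+1].

Definition front_found n (P : {set n.-tuple bool}) : bool :=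
  all (fun y => [exists x in P, fobj x == y]) (Fstar n) &&
  [forall x in P, fobj x \in Fstar n].

Definition flip n (x : n.-tuple bool) (i : 'I_n) : n.-tuple bool :=
  [tuple if j == i then ~~ tnth x j else tnth x j | j < n].

Definition semo_update n (P : {set n.-tuple bool}) (s' : n.-tuple bool) : {set n.-tuple bool} :=
  if [exists z in P, dominates z s'] then P
  else s' |: [set z in P | ~~ weakly_dominates s' z].

Definition sort_by n (g : n.-tuple bool -> nat) (P : {set n.-tuple bool}) : seq (n.-tuple bool) :=
  sort (fun a b => (g a <= g b)%N) (enum P).

Section Scores.
Variable R : realFieldType.
Local Open Scope ring_scope.

(* diversity scores in R extended by +oo (None = +oo) *)
Definition le_score (a b : option R) : bool :=
  match a, b with
  | _, None => true
  | None, Some _ => false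
  | Some x, Some y => x <= y
  end.
Definition add_score (a b : option R) : option R :=
  match a, b with
  | Some x, Some y => Some (x + y)
  | _, _ => None
  end.

Definition HVC (r : R) n (P : {set n.-tuple bool}) (x : n.-tuple bool) : option R :=
  let s := sort_by (@LO n) P in
  let i := index x s in
  let prev1 : R := if i == 0%N then - r else (LO (nth x s i.-1))%:R in
  let next2 : R := if i.+1 == size s then - r else (TZ (nth x s i.+1))%:R in
  Some (((LO x)%:R - prev1) * ((TZ x)%:R - next2)).

Definition cd_obj n (g : n.-tuple bool -> nat) (P : {set n.-tuple bool}) (x : n.-tuple bool)
  : option R :=
  let s := sort_by g P in
  let i := index x s in
  let fmax := (\max_(y in P) g y)%N in
  let fmin := (\big[minn/fmax]_(y in P) g y)%N in
  if (i == 0%N) || (i.+1 == size s) then None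
  else Some (((g (nth x s i.+1))%:R - (g (nth x s i.-1))%:R) / (fmax%:R - fmin%:R)).

Definition CDC n (P : {set n.-tuple bool}) (x : n.-tuple bool) : option R :=
  add_score (add_score (Some 0) (cd_obj (@LO n) P x)) (cd_obj (@TZ n) P x).

Inductive measure := CDCm | HVCm.

Definition score_of (r : R) (m : measure) n : {set n.-tuple bool} -> n.-tuple bool -> option R :=
  match m with CDCm => @CDC n | HVCm => @HVC r n end.

Variable sc : forall n, {set n.-tuple bool} -> n.-tuple bool -> option R.
Variable n : nat.

Definition best (P : {set n.-tuple bool}) : {set n.-tuple bool} :=
  [set x in P | [forall y in P, le_score (sc P y) (sc P x)]].

Definition kernel (P P' : {set n.-tuple bool}) : R :=
  \sum_(x in best P) (#|best P|%:R)^-1 *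
    \sum_(i < n) (n%:R)^-1 * (semo_update P (flip x i) == P')%:R.

Definition init (P : {set n.-tuple bool}) : R :=
  \sum_(s : n.-tuple bool) ((2 ^ n)%N%:R)^-1 * (P == [set s])%:R.

(* surv t P = Pr[P_t = P and f(P_k) <> F* for all k <= t] *)
Fixpoint surv (t : nat) : {ffun {set n.-tuple bool} -> R} :=
  match t with
  | 0 => [ffun P => if front_found P then 0 else init P]
  | t'.+1 => [ffun P' => if front_found P' then 0
                        else \sum_(P : {set n.-tuple bool}) surv t' P * kernel P P']
  end.

(* Pr[T > t] *)
Definition not_done_prob (t : nat) : R := \sum_(P : {set n.-tuple bool}) surv t P.

End Scores.

(* Main.v *)
Require Import Defs.
From mathcomp Require Import all_boot all_order all_algebra.
From mathcomp Require Import zify lra.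
Set Implicit Arguments. Unset Strict Implicit. Unset Printing Implicit Defensive.
Import Order.TTheory GRing.Theory Num.Theory.

Section Bits.
Variable n : nat.
Implicit Types x y z : n.-tuple bool.

Lemma LO_leq x : LO x <= n.
Proof. by rewrite /LO -{2}(size_tuple x) find_size. Qed.

Lemma TZ_leq x : TZ x <= n.
Proof. by rewrite /TZ -{2}(size_tuple x) -size_rev find_size. Qed.

Lemma LO_lt x (j : 'I_n) : j < LO x -> tnth x j.
Proof.
move=> h; have := before_find false h; rewrite (tnth_nth false).
by move/negbFE.
Qed.

Lemma LO_le x (j : 'I_n) : ~~ tnth x j -> LO x <= j.
Proof.
move=> h; rewrite leqNgt; apply/negP => /LO_lt; by rewrite (negbTE h).
Qed.

Lemma LO_ge x k : k <= n -> (forall j : 'I_n, j < k -> tnth x j) -> k <= LO x.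
Proof.
move=> kn h; rewrite leqNgt; apply/negP => lt.
have ln : LO x < n by apply: leq_trans lt kn.
have hs : has negb x.
  by rewrite has_find size_tuple.
have := nth_find false hs; rewrite -/(LO x).
by rewrite -(tnth_nth false x (Ordinal ln)) h.
Qed.

Lemma TZ_lt x (j : 'I_n) : n - TZ x <= j -> ~~ tnth x j.
Proof.
move=> h.
have lt : n - j.+1 < TZ x by have := ltn_ord j; lia.
have := before_find false lt; rewrite nth_rev ?size_tuple; last by have := ltn_ord j; lia.
have -> : n - (n - j.+1).+1 = j by have := ltn_ord j; lia.
by rewrite (tnth_nth false) => ->.
Qed.

Lemma TZ_le x (j : 'I_n) : tnth x j -> TZ x <= n - j.+1.
Proof.
move=> h; rewrite leqNgt; apply/negP => lt.
have : n - TZ x <= j by have := ltn_ord j; lia.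
by move/TZ_lt; rewrite h.
Qed.

Lemma TZ_ge x k : k <= n -> (forall j : 'I_n, n - k <= j -> ~~ tnth x j) -> k <= TZ x.
Proof.
move=> kn h; rewrite leqNgt; apply/negP => lt.
have ln : TZ x < n by apply: leq_trans lt kn.
have hs : has id (rev x) by rewrite has_find size_rev size_tuple.
have := nth_find false hs; rewrite -/(TZ x) nth_rev ?size_tuple //.
have jn : n - (TZ x).+1 < n by lia.
rewrite -(tnth_nth false x (Ordinal jn)).
move=> hb; have := h (Ordinal jn) ltac:(rewrite /=; lia); by rewrite hb.
Qed.

Lemma LOTZ_leq x : LO x + TZ x <= n.
Proof.
rewrite leqNgt; apply/negP => h.
have hl := LO_leq x; have ht := TZ_leq x.
have jn : n - TZ x < n by lia.
have := @LO_lt x (Ordinal jn) ltac:(rewrite /=; lia).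
by rewrite (negbTE (@TZ_lt x (Ordinal jn) (leqnn _))).
Qed.

Definition front k : n.-tuple bool := [tuple (nat_of_ord j < k) | j < n].

Lemma tnth_front k j : tnth (front k) j = (nat_of_ord j < k).
Proof. by rewrite tnth_mktuple. Qed.

Lemma LO_front k : k <= n -> LO (front k) = k.
Proof.
move=> kn; apply/eqP; rewrite eqn_leq; apply/andP; split.
- case: (ltnP k n) => [kn'|kn']; last by have := LO_leq (front k); lia.
  by apply: (@LO_le _ (Ordinal kn')); rewrite tnth_front /= ltnn.
- by apply: LO_ge => // j; rewrite tnth_front.
Qed.

Lemma TZ_front k : k <= n -> TZ (front k) = n - k.
Proof.
move=> kn; apply/eqP; rewrite eqn_leq; apply/andP; split.
- case: (posnP k) => [k0|k0]; first by have := TZ_leq (front k); lia.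
  have jn : k.-1 < n by lia.
  have := @TZ_le (front k) (Ordinal jn); rewrite tnth_front /= prednK //.
  by move=> h; apply: h.
- apply: TZ_ge; first lia.
  by move=> j hj; rewrite tnth_front -leqNgt; lia.
Qed.

Lemma front_eq x : LO x + TZ x = n -> x = front (LO x).
Proof.
move=> h; apply: eq_from_tnth => j; rewrite tnth_front.
case: (ltnP j (LO x)) => hj; first by apply: LO_lt.
by apply/negbTE/TZ_lt; lia.
Qed.

Lemma front_inj k k' : k <= n -> k' <= n -> front k = front k' -> k = k'.
Proof. by move=> h h' e; rewrite -(LO_front h) -(LO_front h') e. Qed.

Lemma tnth_flip x i j : tnth (flip x i) j = if j == i then ~~ tnth x j else tnth x j.
Proof. by rewrite tnth_mktuple. Qed.


Lemma LO_bit x (h : LO x < n) : ~~ tnth x (Ordinal h).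
Proof.
apply/negP => hb.
have := @LO_ge x (LO x).+1 h.
have H : forall j : 'I_n, j < (LO x).+1 -> tnth x j.
  move=> j; rewrite ltnS leq_eqVlt => /orP [/eqP e|lt]; last exact: LO_lt.
  by have -> : j = Ordinal h by apply: val_inj.
by move/(_ H); rewrite ltnn.
Qed.

Lemma TZ_bit x (h : n - (TZ x).+1 < n) : TZ x < n -> tnth x (Ordinal h).
Proof.
move=> hz; apply/negPn/negP => hb.
have := @TZ_ge x (TZ x).+1 hz.
have H : forall j : 'I_n, n - (TZ x).+1 <= j -> ~~ tnth x j.
  move=> j; rewrite leq_eqVlt => /orP [/eqP e|lt].
    by have -> : j = Ordinal h by apply: val_inj.
  by apply: TZ_lt; lia.
by move/(_ H); rewrite ltnn.
Qed.

Lemma dom_pair x y : (LO x <> LO y \/ TZ x <> TZ y) -> fobj x != fobj y.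
Proof. by move=> h; apply/negP => /eqP [] e1 e2; case: h. Qed.

Lemma flip_other x i (j : 'I_n) : j != i -> tnth (flip x i) j = tnth x j.
Proof. by rewrite tnth_flip => /negbTE ->. Qed.

Lemma flip_same x i : tnth (flip x i) i = ~~ tnth x i.
Proof. by rewrite tnth_flip eqxx. Qed.

Lemma KA x (i : 'I_n) : LO x + TZ x < n ->
  let y := flip x i in
  (dominates x y || weakly_dominates y x) /\
  (nat_of_ord i = LO x -> weakly_dominates y x /\ LO x < LO y).
Proof.
move=> hab y.
set a := LO x; set b := TZ x.
have bn : b < n by rewrite /b; lia.
have pn : n - b.+1 < n by lia.
set p := Ordinal pn.
have pv : nat_of_ord p = n - b.+1 by []. have iltn := ltn_ord i.
rewrite -/a -/b in hab.
have xp : tnth x p by apply: TZ_bit.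
have ap : a <= p by rewrite /=; rewrite /a /b in hab *; lia.
have yLOge : a <= i -> a <= LO y.
  move=> ia; apply: LO_ge; first exact: LO_leq.
  move=> j hj; rewrite flip_other; first exact: LO_lt.
  apply/negP => /eqP e; subst j; lia.
have an : a < n by rewrite /a; lia.
have yTZge : (n - b <= i -> False) -> b <= TZ y.
  move=> ib; apply: TZ_ge; first exact: TZ_leq.
  move=> j hj; rewrite flip_other; first exact: TZ_lt.
  apply/negP => /eqP e; subst j; exact: ib.
case: (ltngtP i a) => [ia|ai|ia].
-
  have yi : ~~ tnth y i by rewrite flip_same (LO_lt ia).
  have h1 := LO_le yi.
  have h2 : TZ y <= b.
    have := @TZ_le y p; rewrite flip_other; last first.
      apply/negP => /eqP e; have : nat_of_ord p = nat_of_ord i by rewrite e.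
      rewrite /=; lia.
    move=> /(_ xp) /=; lia.
  split; last by lia.
  apply/orP; left; rewrite /dominates /weakly_dominates; apply/andP; split.
    apply/andP; split; rewrite -/a -/b; lia.
  apply: dom_pair; left; rewrite -/a; lia.
-
  have h1 : a <= LO y by apply: yLOge; lia.
  have h1' : LO y <= a.
    have ya : ~~ tnth y (Ordinal an).
      rewrite flip_other; first exact: LO_bit.
      apply/negP => /eqP e.
      have : nat_of_ord (Ordinal an) = nat_of_ord i by rewrite e.
      rewrite /=; lia.
    exact: (LO_le ya).
  split; last by lia.
  case: (ltngtP i p) => [ip|pi|ip].
  + apply/orP; right; apply/andP; split; rewrite -/a -/b //.
    apply: yTZge => /=; lia.
  + have yi : tnth y i by rewrite flip_same; apply: TZ_lt; rewrite -/b /= in pi *; lia.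
    have := TZ_le yi => h2.
    apply/orP; left; apply/andP; split.
      apply/andP; split; rewrite -/a -/b //; lia.
    apply: dom_pair; right; rewrite -/b; have := ltn_ord i; lia.
  + apply/orP; right; apply/andP; split; rewrite -/a -/b //.
    apply: (@leq_trans b.+1) => //; apply: TZ_ge => //.
    have ei : i = p by apply: val_inj.
    move=> j hj; case: (eqVneq j i) => [->|ji]; first by rewrite flip_same ei xp.
    rewrite flip_other //; apply: TZ_lt; rewrite -/b.
    have : nat_of_ord j != nat_of_ord i by [].
    move=> /eqP; lia.
-
  have h1 : a < LO y.
    have ei : i = Ordinal an by apply: val_inj.
    apply: LO_ge => // j hj; case: (eqVneq j i) => [->|ji].
      by rewrite /y flip_same ei (LO_bit an).
    rewrite flip_other //; apply: LO_lt.
    have : nat_of_ord j != nat_of_ord i by [].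
    rewrite ia -/a; lia.
  have h2 : b <= TZ y by apply: yTZge; rewrite ia -/a; lia.
  have w : weakly_dominates y x by apply/andP; split; rewrite -/a -/b; lia.
  split; first by rewrite w orbT.
  by move=> _; split.
Qed.

End Bits.


Section Pop.
Variable n : nat.
Implicit Types x y z : n.-tuple bool.
Notation fr := (front n).

Definition Seg i j : {set n.-tuple bool} :=
  [set x | (i <= LO x <= j) && (x == fr (LO x))].

Lemma in_Seg i j x : (x \in Seg i j) = (i <= LO x <= j) && (x == fr (LO x)).
Proof. by rewrite inE. Qed.

Lemma front_in_Seg i j k : i <= k <= j -> k <= n -> fr k \in Seg i j.
Proof. by move=> h kn; rewrite in_Seg LO_front // h eqxx. Qed.

Lemma isfront x : x = fr (LO x) -> LO x + TZ x = n.
Proof. move=> e; rewrite e LO_front ?TZ_front ?LO_leq //; have := LO_leq x; lia. Qed.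

Lemma Seg_front i j x : x \in Seg i j -> LO x + TZ x = n.
Proof. by rewrite in_Seg => /andP [_ /eqP /isfront]. Qed.

Lemma Seg_LO i j x : x \in Seg i j -> i <= LO x <= j.
Proof. by rewrite in_Seg => /andP []. Qed.

Lemma upd_dom (P : {set n.-tuple bool}) y z : z \in P -> dominates z y -> semo_update P y = P.
Proof.
move=> zP d; rewrite /semo_update ifT //.
by apply/existsP; exists z; rewrite zP.
Qed.

Lemma upd_single2 x y : ~~ dominates x y -> weakly_dominates y x ->
  semo_update [set x] y = [set y].
Proof.
move=> nd w; rewrite /semo_update ifF; last first.
  apply/negbTE/negP => /existsP [z /andP [] ]; rewrite inE => /eqP ->.
  by rewrite (negbTE nd).
apply/setP => z; rewrite !inE.
case: (eqVneq z x) => [->|zx]; last by rewrite ?andbF ?orbF.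
by rewrite w /= orbF.
Qed.

Lemma front_nodom y z : LO y + TZ y = n -> LO z + TZ z = n -> ~~ dominates z y.
Proof.
move=> hy hz; apply/negP => /andP [/andP [h1 h2] /negP]; apply.
have e1 : LO y = LO z by lia.
have e2 : TZ y = TZ z by lia.
by rewrite /fobj e1 e2.
Qed.

Lemma upd_Seg_front i j k : i <= j -> j <= n -> k <= n -> i <= k.+1 -> k <= j.+1 ->
  semo_update (Seg i j) (fr k) = fr k |: Seg i j.
Proof.
move=> ij jn kn ik kj.
have fk : LO (fr k) + TZ (fr k) = n by rewrite LO_front ?TZ_front //; lia.
rewrite /semo_update ifF; last first.
  apply/negbTE/negP => /existsP [z /andP [zs]].
  by rewrite (negbTE (front_nodom fk (Seg_front zs))).
apply/setP => z; rewrite !inE.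
case: (eqVneq z (fr k)) => [->|zk] //=.
case fz: (z == fr (LO z)); rewrite ?andbF ?andFb //= andbT.
have lz : LO z != k.
  by apply/negP => /eqP e; move: zk; rewrite (eqP fz) e eqxx.
have := isfront (eqP fz) => hz.
suff -> : ~~ weakly_dominates (fr k) z by rewrite andbT.
apply/negP => /andP [h1 h2]; rewrite LO_front ?TZ_front // in h1 h2.
move: lz => /eqP; lia.
Qed.

Lemma Seg_add i j k : i <= j -> k <= n -> i <= k.+1 -> k <= j.+1 ->
  fr k |: Seg i j = Seg (minn i k) (maxn j k).
Proof.
move=> ij kn ik kj; apply/setP => z; rewrite !inE.
case: (eqVneq z (fr k)) => [->|zk] /=.
  by rewrite LO_front // eqxx andbT geq_minr leq_maxr.
case fz: (z == fr (LO z)); rewrite ?andbF //.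
have lz : LO z != k.
  by apply/negP => /eqP e; move: zk; rewrite (eqP fz) e eqxx.
rewrite !andbT; apply/idP/idP => /andP [h1 h2]; apply/andP; split; move: lz => /eqP; lia.
Qed.

Lemma flip_front_down k (m : 'I_n) : m.+1 = k -> flip (fr k) m = fr k.-1.
Proof.
move=> e; apply: eq_from_tnth => j; rewrite tnth_flip !tnth_front.
case: (eqVneq j m) => [->|jm]; first by rewrite -e ltnSn ltnn.
have : nat_of_ord j != nat_of_ord m by []. move=> /eqP; lia.
Qed.

Lemma flip_front_up k (m : 'I_n) : nat_of_ord m = k -> flip (fr k) m = fr k.+1.
Proof.
move=> e; apply: eq_from_tnth => j; rewrite tnth_flip !tnth_front.
case: (eqVneq j m) => [->|jm]; first by rewrite e ltnn ltnSn.
have : nat_of_ord j != nat_of_ord m by []. move=> /eqP; lia.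
Qed.

Lemma flip_front_dom k (m : 'I_n) : k <= n -> m.+1 != k -> nat_of_ord m != k ->
  dominates (fr k) (flip (fr k) m).
Proof.
move=> kn h1 h2; set y := flip (fr k) m.
have mn := ltn_ord m.
have hLO : LO y <= k.
  case: (ltnP k n) => [kn'|kn']; last by have := LO_leq y; lia.
  apply: (@LO_le _ y (Ordinal kn')).
  rewrite /y flip_other ?tnth_front /= ?ltnn //.
  by apply/negP => /eqP e; move: h2; rewrite -e eqxx.
have hTZ : TZ y <= n - k.
  case: (posnP k) => [k0|k0]; first by have := TZ_leq y; lia.
  have jn : k.-1 < n by lia.
  have := @TZ_le _ y (Ordinal jn).
  rewrite /y flip_other ?tnth_front /=; last first.
    apply/negP => /eqP e; move: h1; rewrite -e /= prednK // eqxx //.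
  by rewrite prednK // => /(_ (ltnSn _)).
rewrite /dominates /weakly_dominates LO_front ?TZ_front // hLO hTZ /=.
apply: dom_pair; rewrite LO_front ?TZ_front //.
case: (ltnP m k) => mk.
- left; have : LO y <= m.
    apply: LO_le; rewrite /y flip_same tnth_front mk //.
  lia.
- right; have : TZ y <= n - m.+1.
    apply: TZ_le; rewrite /y flip_same tnth_front ltnNge mk //.
  move: h2 => /eqP; lia.
Qed.

Definition dist (P : {set n.-tuple bool}) : nat :=
  (n.+1 - #|P|) + \sum_(x in P) (n - (LO x + TZ x)).

Lemma dist_single x : dist [set x] = n + (n - (LO x + TZ x)).
Proof. by rewrite /dist cards1 big_set1 subSS subn0. Qed.

Lemma dist_Seg i j : dist (Seg i j) = n.+1 - #|Seg i j|.
Proof.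
rewrite /dist big1 ?addn0 // => x /Seg_front ->; by rewrite subnn.
Qed.

Lemma card_Seg_le i j : #|Seg i j| <= n.+1.
Proof.
apply: (@leq_trans #|[set fr (nat_of_ord k) | k : 'I_n.+1]|).
  apply: subset_leq_card; apply/subsetP => x xs.
  have := xs; rewrite in_Seg => /andP [_ /eqP ->].
  have h : LO x < n.+1 by rewrite ltnS LO_leq.
  by apply/imsetP; exists (Ordinal h).
by apply: leq_trans (leq_imset_card _ _) _; rewrite card_ord.
Qed.

Lemma Seg_single k : k <= n -> [set fr k] = Seg k k.
Proof.
move=> kn; apply/setP => z; rewrite !inE.
case: (eqVneq z (fr k)) => [->|zk]; first by rewrite LO_front // leqnn eqxx.
apply/esym/negP => /andP [/andP [h1 h2] /eqP e].
have ek : LO z = k by lia.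
by move: zk; rewrite e ek eqxx.
Qed.

Definition good (P : {set n.-tuple bool}) : bool :=
  [exists x, (P == [set x]) && (LO x + TZ x < n)] ||
  [exists i : 'I_n.+1, exists j : 'I_n.+1, (i <= j) && (P == Seg i j)].

Lemma goodSeg i j : i <= j -> j <= n -> good (Seg i j).
Proof.
move=> ij jn; apply/orP; right.
have hi : i < n.+1 by lia.
have hj : j < n.+1 by lia.
by apply/existsP; exists (Ordinal hi); apply/existsP; exists (Ordinal hj); rewrite /= ij eqxx.
Qed.

Lemma good_single x : good [set x].
Proof.
case: (ltnP (LO x + TZ x) n) => h.
  by apply/orP; left; apply/existsP; exists x; rewrite eqxx h.
have e : LO x + TZ x = n by have := LOTZ_leq x; lia.
rewrite (front_eq e) Seg_single ?LO_leq //; apply: goodSeg => //; exact: LO_leq.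
Qed.

Definition goodcase (P : {set n.-tuple bool}) :
  good P -> (exists x, P = [set x] /\ LO x + TZ x < n) \/
            (exists i j, [/\ i <= j, j <= n & P = Seg i j]).
Proof.
case/orP => [/existsP [x /andP [/eqP -> h]]|/existsP [i /existsP [j /andP [ij /eqP ->]]]].
  by left; exists x.
by right; exists i, j; split => //; rewrite -ltnS.
Qed.

Lemma good_step P x (m : 'I_n) : good P -> x \in P ->
  good (semo_update P (flip x m)) /\ dist (semo_update P (flip x m)) <= dist P.
Proof.
move=> /goodcase [[z [-> hz]]|[i [j [ij jn ->]]]] xP.
- move: xP; rewrite inE => /eqP ->.
  have [/orP [dz|wz] _] := KA m hz.
    by rewrite (upd_dom (set11 z) dz) good_single.
  case: (boolP (dominates z (flip z m))) => dz.
    by rewrite (upd_dom (set11 z) dz) good_single.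
  rewrite upd_single2 // good_single; split => //.
  rewrite !dist_single; move: wz => /andP [h1 h2]; lia.
- have xs := xP; rewrite in_Seg in xs; case/andP: xs => /andP [ix xj] /eqP xf.
  set k := LO x in ix xj xf.
  have kn : k <= n by apply: LO_leq.
  rewrite xf.
  have [e|ne1] := eqVneq m.+1 k.
    rewrite flip_front_down // upd_Seg_front //; try lia.
    rewrite Seg_add //; try lia.
    split; first by apply: goodSeg; lia.
    rewrite !dist_Seg; apply: leq_sub2l; apply: subset_leq_card.
    by apply/subsetP => w; rewrite !in_Seg => /andP [h1 ->]; rewrite andbT; lia.
  have [e|ne2] := eqVneq (nat_of_ord m) k.
    have mn := ltn_ord m.
    rewrite flip_front_up // upd_Seg_front //; try lia.
    rewrite Seg_add //; try lia.
    split; first by apply: goodSeg; lia.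
    rewrite !dist_Seg; apply: leq_sub2l; apply: subset_leq_card.
    by apply/subsetP => w; rewrite !in_Seg => /andP [h1 ->]; rewrite andbT; lia.
  have xP' : fr k \in Seg i j by rewrite -xf.
  rewrite (upd_dom xP' (flip_front_dom kn ne1 ne2)); split => //.
  exact: goodSeg.
Qed.

Definition ext (P : {set n.-tuple bool}) x : bool :=
  [exists m : 'I_n, dist (semo_update P (flip x m)) < dist P].

Lemma ext_single x : LO x + TZ x < n -> ext [set x] x.
Proof.
move=> h; have an : LO x < n by lia.
apply/existsP; exists (Ordinal an).
have [_ /(_ erefl) [w lt]] := KA (Ordinal an) h.
rewrite upd_single2 //; last first.
  apply/negP => /andP [/andP [h1 _] _]; lia.
rewrite !dist_single; move: w => /andP [h1 h2].
have := LOTZ_leq (flip x (Ordinal an)); lia.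
Qed.

Lemma ext_add i j k : i <= j -> j <= n -> k <= n -> i <= k.+1 -> k <= j.+1 ->
  fr k \notin Seg i j -> dist (fr k |: Seg i j) < dist (Seg i j).
Proof.
move=> ij jn kn ik kj nin.
have le := card_Seg_le (minn i k) (maxn j k).
rewrite -Seg_add // in le.
rewrite Seg_add // dist_Seg -Seg_add // dist_Seg.
rewrite cardsU1 nin in le *; rewrite add1n in le *; lia.
Qed.

Lemma ext_low i j : 0 < i -> i <= j -> j <= n -> ext (Seg i j) (fr i).
Proof.
move=> i0 ij jn; have mn : i.-1 < n by lia.
apply/existsP; exists (Ordinal mn).
rewrite flip_front_down /=; last by lia.
rewrite upd_Seg_front //; try lia.
apply: ext_add => //; try lia.
rewrite in_Seg LO_front; last by lia.
apply/negP => /andP [/andP [h _] _]; lia.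
Qed.

Lemma ext_high i j : i <= j -> j < n -> ext (Seg i j) (fr j).
Proof.
move=> ij jn.
apply/existsP; exists (Ordinal jn).
rewrite flip_front_up //.
rewrite upd_Seg_front //; try lia.
apply: ext_add => //; try lia.
rewrite in_Seg LO_front; last by lia.
apply/negP => /andP [/andP [_ h] _]; lia.
Qed.

End Pop.


Section Sorts.
Variable n : nat.
Implicit Types x y z : n.-tuple bool.
Notation fr := (front n).

Definition L i j : seq (n.-tuple bool) := [seq fr k | k <- iota i (j - i).+1].

Lemma L_uniq i j : i <= j -> j <= n -> uniq (L i j).
Proof.
move=> ij jn; rewrite map_inj_in_uniq ?iota_uniq // => a b.
rewrite !mem_iota => ha hb e; apply: (front_inj _ _ e); lia.
Qed.

Lemma mem_L i j x : i <= j -> j <= n -> (x \in L i j) = (x \in Seg n i j).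
Proof.
move=> ij jn; rewrite in_Seg; apply/mapP/idP.
  move=> [k]; rewrite mem_iota => hk ->; rewrite LO_front ?eqxx ?andbT; lia.
move=> /andP [h /eqP e]; exists (LO x) => //; rewrite mem_iota; lia.
Qed.

Lemma size_L i j : size (L i j) = (j - i).+1.
Proof. by rewrite size_map size_iota. Qed.

Lemma nth_L i j x0 t : t <= j - i -> nth x0 (L i j) t = fr (i + t).
Proof. move=> h; rewrite (nth_map 0) ?size_iota ?nth_iota //; lia. Qed.

Lemma index_L i j k : i <= k <= j -> j <= n -> index (fr k) (L i j) = k - i.
Proof.
move=> h jn; have e : fr k = nth (fr k) (L i j) (k - i) by rewrite nth_L; [congr fr|]; lia.
have U : uniq (L i j) by apply: L_uniq; lia.
rewrite {1}e index_uniq ?size_L //; lia.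
Qed.

Lemma sort_LO i j : i <= j -> j <= n -> sort_by (@LO n) (Seg n i j) = L i j.
Proof.
move=> ij jn; apply/esym; apply: (@sorted_eq_in _ (fun a b => LO a <= LO b)%N).
- by move=> a b c _ _ _; apply: leq_trans.
- move=> a b /mapP [ka]; rewrite mem_iota => hka -> /mapP [kb]; rewrite mem_iota => hkb ->.
  rewrite /= !LO_front; try lia. by move=> h; congr fr; lia.
- rewrite sorted_map; apply: (@sub_in_sorted _ (fun k => k <= n)%N leq) => //.
    by move=> a b ha hb /=; rewrite !LO_front.
  by apply/allP => k; rewrite mem_iota; lia.
  exact: iota_sorted.
- by apply: sort_sorted => a b; apply: leq_total.
- rewrite perm_sym perm_sort; apply: uniq_perm; [exact: enum_uniq|exact: L_uniq|].
  by move=> x; rewrite mem_enum mem_L.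
Qed.

Lemma sort_TZ i j : i <= j -> j <= n -> sort_by (@TZ n) (Seg n i j) = rev (L i j).
Proof.
move=> ij jn; apply/esym; apply: (@sorted_eq_in _ (fun a b => TZ a <= TZ b)%N).
- by move=> a b c _ _ _; apply: leq_trans.
- move=> a b; rewrite !mem_rev => /mapP [ka]; rewrite mem_iota => hka -> /mapP [kb];
    rewrite mem_iota => hkb ->.
  rewrite /= !TZ_front; try lia. by move=> h; congr fr; lia.
- rewrite rev_sorted sorted_map; apply: (@sub_in_sorted _ (fun k => k <= n)%N leq) => //.
    by move=> a b ha hb /=; rewrite !TZ_front //; lia.
  by apply/allP => k; rewrite mem_iota; lia.
  exact: iota_sorted.
- by apply: sort_sorted => a b; apply: leq_total.
- rewrite perm_sym perm_sort; apply: uniq_perm; [exact: enum_uniq|rewrite rev_uniq; exact: L_uniq|].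
  by move=> x; rewrite mem_enum mem_rev mem_L.
Qed.

Lemma index_revL i j k : i <= k <= j -> j <= n -> index (fr k) (rev (L i j)) = j - k.
Proof.
move=> h jn.
have e : fr k = nth (fr k) (rev (L i j)) (j - k).
  rewrite nth_rev ?size_L; last lia.
  rewrite nth_L; last lia. congr fr; lia.
have U : uniq (L i j) by apply: L_uniq; lia.
rewrite {1}e index_uniq ?size_rev ?size_L ?rev_uniq //; lia.
Qed.

Lemma Seg0n_found : front_found (Seg n 0 n).
Proof.
apply/andP; split.
  apply/allP => y /mapP [k]; rewrite mem_iota => hk ->.
  have kn : (k <= n)%N by lia.
  have hs : fr k \in Seg n 0 n by apply: front_in_Seg; [rewrite leq0n kn|exact: kn].
  apply/existsP; exists (fr k); rewrite hs /=.
  by rewrite /fobj LO_front ?TZ_front.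
apply/forallP => x; apply/implyP => xs.
have := Seg_front xs => h.
apply/mapP; exists (LO x); first by rewrite mem_iota; have := LO_leq x; lia.
rewrite /fobj; congr pair; lia.
Qed.

End Sorts.

Section Scores.
Variable R : realFieldType.
Local Open Scope ring_scope.

Lemma le_score_refl (a : option R) : le_score a a.
Proof. by case: a => //= a; rewrite lexx. Qed.

Lemma le_score_total (a b : option R) : le_score a b || le_score b a.
Proof. by case: a; case: b => //= a b; apply: le_total. Qed.

Lemma le_score_trans (a b c : option R) : le_score a b -> le_score b c -> le_score a c.
Proof. by case: a; case: b; case: c => //= c b a; apply: le_trans. Qed.

Lemma exists_max (T : eqType) (f : T -> option R) (s : seq T) : s != [::] ->
  exists2 x, x \in s & forall y, y \in s -> le_score (f y) (f x).
Proof.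
elim: s => // a s IH _.
case: (eqVneq s [::]) => [->|sn].
  by exists a; rewrite ?inE // => y; rewrite inE => /eqP ->; apply: le_score_refl.
have [b bs hb] := IH sn.
case/orP: (le_score_total (f a) (f b)) => h.
  exists b; first by rewrite inE bs orbT.
  by move=> y; rewrite inE => /orP [/eqP ->|]; [|apply: hb].
exists a; first by rewrite inE eqxx.
move=> y; rewrite inE => /orP [/eqP ->|ys]; first exact: le_score_refl.
exact: le_score_trans (hb _ ys) h.
Qed.

Variable sc : forall n, {set n.-tuple bool} -> n.-tuple bool -> option R.
Variable n : nat.

Lemma best_sub (P : {set n.-tuple bool}) : best sc P \subset P.
Proof. by apply/subsetP => x; rewrite inE => /andP []. Qed.

Lemma in_best (P : {set n.-tuple bool}) x :
  (x \in best sc P) = (x \in P) && [forall y in P, le_score (sc P y) (sc P x)].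
Proof. by rewrite inE. Qed.

Lemma best_nonempty (P : {set n.-tuple bool}) : P != set0 -> (0 < #|best sc P|)%N.
Proof.
move=> Pn; have : enum P != [::].
  apply/negP => /eqP e; move/set0Pn: Pn => [x]; by rewrite -mem_enum e.
case/(exists_max (sc P)) => x; rewrite mem_enum => xP h.
apply/card_gt0P; exists x; rewrite in_best xP /=.
by apply/forall_inP => y yP; apply: h; rewrite mem_enum.
Qed.

Lemma best_single (x : n.-tuple bool) : best sc [set x] = [set x].
Proof.
apply/setP => y; rewrite in_best; case: (boolP (y \in [set x])) => //= /set1P ->.
by apply/forall_inP => z /set1P ->; apply: le_score_refl.
Qed.

End Scores.


Section Best.
Variable R : realFieldType.
Variable n : nat.
Local Open Scope ring_scope.
Notation fr := (front n).

Lemma CDC_end (i j k : nat) : (i <= j)%N -> (j <= n)%N -> (k == i) || (k == j) ->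
  (i <= k <= j)%N -> CDC R (Seg n i j) (fr k) = None.
Proof.
move=> ij jn hk hk'.
rewrite /CDC /cd_obj sort_LO // index_L // size_L.
case/orP: hk => /eqP ->; first by rewrite subnn eqxx.
by rewrite eqxx orbT.
Qed.

Lemma CDC_mid (i j k : nat) : (i <= j)%N -> (j <= n)%N -> (i < k < j)%N ->
  exists v, CDC R (Seg n i j) (fr k) = Some v.
Proof.
move=> ij jn hk.
rewrite /CDC /cd_obj sort_LO // sort_TZ // index_L ?index_revL ?size_L ?size_rev //; try lia.
rewrite size_L.
have -> : (k - i == 0)%N = false by apply/negbTE; lia.
have -> : ((k - i).+1 == (j - i).+1)%N = false by apply/negbTE; lia.
have -> : (j - k == 0)%N = false by apply/negbTE; lia.
have -> : ((j - k).+1 == (j - i).+1)%N = false by apply/negbTE; lia.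
by eexists.
Qed.

Lemma HVC_Seg (r : R) (i j k : nat) : (i <= k <= j)%N -> (j <= n)%N ->
  HVC r (Seg n i j) (fr k) =
  Some ((if k == i then k%:R + r else 1) * (if k == j then (n - k)%:R + r else 1)).
Proof.
move=> hk jn.
have ij : (i <= j)%N by lia.
have kn : (k <= n)%N by lia.
rewrite /HVC sort_LO // index_L // size_L LO_front // TZ_front //.
congr Some; congr (_ * _).
- case: (eqVneq k i) => [->|ki]; first by rewrite subnn eqxx opprK.
  have -> : (k - i == 0)%N = false by apply/negbTE; lia.
  rewrite nth_L; last by lia.
  rewrite LO_front; last by lia.
  have -> : (i + (k - i).-1 = k.-1)%N by lia.
  have -> : k = (k.-1).+1 by lia.
  by rewrite -natr1 /= addrC addKr.
  case: (eqVneq k j) => [->|kj]; first by rewrite eqxx opprK.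
  have -> : ((k - i).+1 == (j - i).+1)%N = false by apply/negbTE; lia.
  rewrite nth_L; last by lia.
  rewrite TZ_front; last by lia.
  have -> : (n - k = (n - (i + (k - i).+1)).+1)%N by lia.
  by rewrite -natr1 addrC addKr.
Qed.

Lemma le_score_None (a : option R) : le_score a None.
Proof. by case: a. Qed.

Lemma best_ext (r : R) (m : measure) (P : {set n.-tuple bool}) :
  1 <= r -> good P -> ~~ front_found P ->
  (0 < #|best (score_of r m) P|)%N /\
  (#|best (score_of r m) P| <= 2 * #|[set x in best (score_of r m) P | ext P x]|)%N.
Proof.
move=> r1 /goodcase [[z [-> hz]]|[i [j [ij jn ->]]]] nf.
  rewrite best_single cards1; split => //.
  have -> : [set x in [set z] | ext [set z] x] = [set z].
    apply/setP => x; rewrite !inE; case: (eqVneq x z) => [->|] //=.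
    exact: ext_single.
  by rewrite cards1.
have ij' : (0 < i)%N || (j < n)%N.
  case: (posnP i) => [i0|]; last by [].
  case: (ltnP j n) => [//|jn']; have e : j = n by lia.
  by move: nf; rewrite i0 e Seg0n_found.
have fiS : fr i \in Seg n i j by apply: front_in_Seg; lia.
have fjS : fr j \in Seg n i j by apply: front_in_Seg; lia.
have Sn : Seg n i j != set0 by apply/set0Pn; exists (fr i).
have xfront : forall x, x \in Seg n i j -> x = fr (LO x) /\ (i <= LO x <= j)%N.
  by move=> x; rewrite in_Seg => /andP [h /eqP e].
case: m.
-
  set sc := score_of r CDCm.
  have bi : fr i \in best sc (Seg n i j).
    rewrite in_best fiS /=; apply/forall_inP => y _.
    have -> : sc _ (Seg n i j) (fr i) = None by apply: CDC_end; rewrite ?eqxx //; lia.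
    exact: le_score_None.
  have bj : fr j \in best sc (Seg n i j).
    rewrite in_best fjS /=; apply/forall_inP => y _.
    have -> : sc _ (Seg n i j) (fr j) = None by apply: CDC_end; rewrite ?eqxx ?orbT //; lia.
    exact: le_score_None.
  have sub : best sc (Seg n i j) \subset [set fr i; fr j].
    apply/subsetP => x; rewrite in_best => /andP [xS /forall_inP h].
    have [ex hx] := xfront x xS.
    rewrite !inE; case: (eqVneq (LO x) i) => [e|ne1]; first by rewrite ex e eqxx.
    case: (eqVneq (LO x) j) => [e|ne2]; first by rewrite ex e eqxx orbT.
    have := h _ fiS; rewrite /sc /= CDC_end ?eqxx //; last by lia.
    have [v hv] := @CDC_mid i j (LO x) ij jn ltac:(move: ne1 ne2 => /eqP ? /eqP ?; lia).
    by rewrite -ex in hv; rewrite hv.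
  split; first by apply/card_gt0P; exists (fr i).
  apply: (@leq_trans 2).
    apply: leq_trans (subset_leq_card sub) _; by rewrite cards2; case: (_ != _).
  suff : (0 < #|[set x in best sc (Seg n i j) | ext (Seg n i j) x]|)%N by lia.
  apply/card_gt0P.
  case/orP: ij' => h.
    by exists (fr i); rewrite inE bi /=; apply: ext_low.
  by exists (fr j); rewrite inE bj /=; apply: ext_high.
-
  set sc := score_of r HVCm.
  have sub : best sc (Seg n i j) \subset [set x in best sc (Seg n i j) | ext (Seg n i j) x].
    apply/subsetP => x xb; rewrite inE xb /=.
    move: xb; rewrite in_best => /andP [xS /forall_inP h].
    have [ex hx] := xfront x xS.
    set k := LO x in ex hx.
    rewrite ex.
    have hi := h _ fiS; have hj := h _ fjS.
    have hs : forall y, sc n (Seg n i j) y = HVC r (Seg n i j) y by []. rewrite ex in hi hj; rewrite !hs !HVC_Seg /= in hi hj; try lia.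
    have r0 : 0 <= r by lra.
    case/orP: ij' => [i0|jn'].
    + case: (eqVneq k i) => [e|ki]; first by rewrite e; apply: ext_low.
      have ik : (i < k)%N by move: ki => /eqP; lia.
      have i1 : 1 <= (i%:R : R) by rewrite ler1n.
      have eij : (i == j) = false by apply/negbTE; lia.
      rewrite (negbTE ki) eij eqxx in hi.
      case: (eqVneq k j) => [e|kj].
        case: (ltnP j n) => [jn'|jn']; first by rewrite e; apply: ext_high.
        exfalso; rewrite e eqxx in hi.
        have e2 : (n - j = 0)%N by lia.
        rewrite e2 mulr1 mul1r in hi; lra.
      exfalso; rewrite (negbTE kj) !mulr1 in hi; lra.
    + case: (eqVneq k j) => [e|kj]; first by rewrite e; apply: ext_high.
      have kj' : (k < j)%N by move: kj => /eqP; lia.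
      have nj : 1 <= ((n - j)%:R : R) by rewrite ler1n; lia.
      have eji : (j == i) = false by apply/negbTE; lia.
      rewrite (negbTE kj) eqxx eji mul1r mulr1 in hj.
      case: (eqVneq k i) => [e|ki] /=; last by exfalso; rewrite (negbTE ki) in hj; lra.
      case: (posnP i) => [i0|ip]; last by rewrite e; apply: ext_low.
      exfalso; rewrite e eqxx i0 mulr0n add0r in hj; lra.
  split; first exact: best_nonempty.
  apply: leq_trans (subset_leq_card sub) _; lia.
Qed.

End Best.


Section Prob.
Variable R : realFieldType.
Variable r : R.
Variable m : measure.
Variable n : nat.
Hypothesis n0 : (0 < n)%N.
Local Open Scope ring_scope.
Hypothesis r1 : 1 <= r.

Notation sc := (score_of r m).
Notation K := (@kernel R sc n).
Notation S := (@surv R sc n).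
Notation pop := {set n.-tuple bool}.

Lemma kernel_ge0 (P P' : pop) : 0 <= K P P'.
Proof.
rewrite /kernel; apply: sumr_ge0 => x _; apply: mulr_ge0; first by rewrite invr_ge0 ler0n.
apply: sumr_ge0 => i _; apply: mulr_ge0; by rewrite ?invr_ge0 ler0n.
Qed.

Lemma init_ge0 (P : pop) : 0 <= init R P.
Proof.
rewrite /init; apply: sumr_ge0 => s _; apply: mulr_ge0; by rewrite ?invr_ge0 ler0n.
Qed.

Lemma surv_ge0 t (P : pop) : 0 <= S t P.
Proof.
elim: t P => [|t IH] P /=; rewrite ffunE; case: ifP => // _.
  exact: init_ge0.
apply: sumr_ge0 => Q _; apply: mulr_ge0 => //; exact: kernel_ge0.
Qed.

Lemma surv_final t (P : pop) : front_found P -> S t P = 0.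
Proof. by case: t => [|t] /= h; rewrite ffunE h. Qed.

Lemma kernel_bad (P P' : pop) : good P -> ~~ good P' -> K P P' = 0.
Proof.
move=> gP gP'; rewrite /kernel big1 // => x xb.
rewrite big1 ?mulr0 // => i _.
have [g _] := good_step i gP (subsetP (best_sub sc P) x xb).
have -> : (semo_update P (flip x i) == P') = false.
  by apply/negbTE/negP => /eqP e; move: gP'; rewrite -e g.
by rewrite mulr0.
Qed.

Lemma surv_good t (P : pop) : ~~ good P -> S t P = 0.
Proof.
elim: t P => [|t IH] P gP /=; rewrite ffunE; case: ifP => // _.
  rewrite /init big1 // => s _.
  have -> : (P == [set s]) = false.
    by apply/negbTE/negP => /eqP e; move: gP; rewrite e good_single.
  by rewrite mulr0.
rewrite big1 // => Q _.
case: (boolP (good Q)) => gQ; first by rewrite kernel_bad ?mulr0.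
by rewrite IH ?mul0r.
Qed.

Definition Phi (P : pop) : R := ((2 * n) * dist P)%N%:R.

Lemma Phi_ge0 P : 0 <= Phi P.
Proof. by rewrite ler0n. Qed.

Lemma sum_ind (Q : pop) : \sum_(P' : pop) (Q == P')%:R * Phi P' = Phi Q.
Proof.
rewrite (bigD1 Q) //= eqxx mul1r big1 ?addr0 // => P' /negbTE.
by rewrite eq_sym => ->; rewrite mul0r.
Qed.

Lemma expect (P : pop) : \sum_(P' : pop) K P P' * Phi P' =
  \sum_(x in best sc P) (#|best sc P|%:R)^-1 *
     \sum_(i < n) (n%:R)^-1 * Phi (semo_update P (flip x i)).
Proof.
rewrite /kernel.
under eq_bigr do rewrite mulr_suml.
rewrite exchange_big /=; apply: eq_bigr => x _.
under eq_bigr do rewrite -mulrA.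
rewrite -mulr_sumr; congr (_ * _).
rewrite (eq_bigr (fun Q : pop => \sum_(i0 < n) n%:R^-1 * (semo_update P (flip x i0) == Q)%:R * Phi Q)); last first.
  by move=> Q _; rewrite mulr_suml.
rewrite exchange_big /=; apply: eq_bigr => i _.
under eq_bigr do rewrite -mulrA.
by rewrite -mulr_sumr sum_ind.
Qed.

Lemma nat_inner (D : 'I_n -> nat) d (e : bool) :
  (forall i, D i <= d)%N -> (e -> exists i0, D i0 < d)%N ->
  (\sum_(i < n) D i + e <= n * d)%N.
Proof.
move=> hD he.
have -> : (n * d = \sum_(i < n) d)%N by rewrite sum_nat_const card_ord.
case: e he => [/(_ isT) [i0 hi0]|_]; last by rewrite addn0; apply: leq_sum => i _.
rewrite (bigD1 i0) //= [X in (_ <= X)%N](bigD1 i0) //=.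
rewrite addnAC; apply: leq_add; first by rewrite addn1.
by apply: leq_sum => i _; apply: hD.
Qed.

Lemma inner (P : pop) x : good P -> x \in P ->
  \sum_(i < n) (n%:R)^-1 * Phi (semo_update P (flip x i)) <= Phi P - 2 * (ext P x)%:R.
Proof.
move=> gP xP.
have hn : (n%:R : R) != 0 by rewrite pnatr_eq0 -lt0n.
have hnat := @nat_inner (fun i => dist (semo_update P (flip x i))) (dist P) (ext P x)
  (fun i => (good_step i gP xP).2)
  (fun h => match existsP h with ex_intro i0 hi => ex_intro _ i0 hi end).
have e1 : forall k : nat, (n%:R)^-1 * ((2 * n) * k)%N%:R = 2 * k%:R :> R.
  by move=> k; rewrite !natrM [2%:R * _]mulrC -!mulrA mulKf.
under eq_bigr do rewrite /Phi e1.
rewrite -mulr_sumr -natr_sum /Phi -mulnA natrM -mulrBr.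
rewrite ler_pM2l ?ltr0Sn //.
rewrite lerBrDr -natrD ler_nat; exact: hnat.
Qed.

Lemma card_ext (P : pop) :
  \sum_(x in best sc P) (ext P x)%:R = (#|[set x in best sc P | ext P x]|%:R : R).
Proof.
rewrite -natr_sum; congr (_%:R).
rewrite -sum1_card big_mkcond [RHS]big_mkcond /=; apply: eq_bigr => x _.
rewrite [in RHS]in_set /=; by case: (x \in best sc P); case: (ext P x).
Qed.

Lemma drift (P : pop) : good P -> ~~ front_found P ->
  \sum_(P' : pop) K P P' * Phi P' <= Phi P - 1.
Proof.
move=> gP nf; rewrite expect.
have [b0 b2] := best_ext m r1 gP nf.
set B := best sc P in b0 b2 *.
set E := [set x in B | ext P x] in b2 *.
apply: (@le_trans _ _ (\sum_(x in B) (#|B|%:R)^-1 * (Phi P - 2 * (ext P x)%:R))).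
  apply: ler_sum => x xB; apply: ler_wpM2l; first by rewrite invr_ge0 ler0n.
  apply: inner => //; exact: (subsetP (best_sub sc P)).
rewrite -mulr_sumr sumrB sumr_const -mulr_sumr card_ext -/E.
have bpos : (0 : R) < #|B|%:R by rewrite ltr0n.
rewrite -[Phi P *+ _]mulr_natr mulrBr mulrCA mulVf ?mulr1; last by rewrite gt_eqF.
rewrite lerD2l lerN2 ler_pdivlMl // mulr1 -natrM ler_nat; lia.
Qed.

Definition Sm t : R := \sum_(P : pop) S t P * Phi P.

Lemma step t : Sm t.+1 <= Sm t - not_done_prob sc n t.
Proof.
rewrite /Sm /not_done_prob -sumrB.
apply: (@le_trans _ _ (\sum_(P' : pop) (\sum_(P : pop) S t P * K P P') * Phi P')).
  apply: ler_sum => P' _; rewrite /= ffunE; case: ifP => _; last by [].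
  rewrite mul0r; apply: mulr_ge0 => //; apply: sumr_ge0 => P _.
  apply: mulr_ge0; [exact: surv_ge0|exact: kernel_ge0].
under eq_bigr do rewrite mulr_suml.
rewrite exchange_big /=; apply: ler_sum => P _.
under eq_bigr do rewrite -mulrA.
rewrite -mulr_sumr -[X in _ <= _ - X]mulr1 -mulrBr.
case: (boolP (good P && ~~ front_found P)) => [/andP [g nf]|h].
  by apply: ler_wpM2l; [exact: surv_ge0|exact: drift].
have -> : S t P = 0.
  case: (boolP (good P)) => g; last exact: surv_good.
  by move: h; rewrite g /= negbK => /surv_final ->.
by rewrite !mul0r.
Qed.

Lemma Sm_ge0 t : 0 <= Sm t.
Proof. apply: sumr_ge0 => P _; apply: mulr_ge0; [exact: surv_ge0|exact: Phi_ge0]. Qed.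

Lemma tele N : \sum_(t < N) not_done_prob sc n t + Sm N <= Sm 0.
Proof.
elim: N => [|N IH]; first by rewrite big_ord0 add0r.
rewrite big_ord_recr /=.
apply: le_trans IH; rewrite -addrA lerD2l.
have := step N; lra.
Qed.

Lemma dist_good (P : pop) : good P -> (dist P <= 2 * n)%N.
Proof.
move=> /goodcase [[z [-> hz]]|[i [j [ij jn ->]]]].
  rewrite dist_single; lia.
rewrite dist_Seg.
have : (0 < #|Seg n i j|)%N.
  apply/card_gt0P; exists (front n i); apply: front_in_Seg; lia.
lia.
Qed.

Lemma sum_init : \sum_(P : pop) init R P = 1.
Proof.
rewrite /init exchange_big /=.
under eq_bigr => s _.
  rewrite -mulr_sumr (bigD1 [set s]) //= eqxx big1 ?addr0 ?mulr1; last first.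
    by move=> P /negbTE ->.
  over.
rewrite sumr_const card_tuple card_bool -[_ *+ _]mulr_natr mulVf //.
by rewrite pnatr_eq0 expn_eq0.
Qed.

Lemma S0_bound : Sm 0 <= ((2 * n) * (2 * n))%N%:R.
Proof.
apply: (@le_trans _ _ (\sum_(P : pop) S 0 P * ((2 * n) * (2 * n))%N%:R)).
  apply: ler_sum => P _.
  case: (boolP (good P)) => g; last by rewrite surv_good // !mul0r.
  apply: ler_wpM2l; first exact: surv_ge0.
  rewrite /Phi ler_nat leq_mul2l; have := dist_good g; lia.
rewrite -mulr_suml -[X in _ <= X]mul1r; apply: ler_wpM2r; first by rewrite ler0n.
rewrite -sum_init; apply: ler_sum => P _; rewrite /= ffunE.
by case: ifP => _ //; exact: init_ge0.
Qed.

End Prob.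

Unset Implicit Arguments.
Local Open Scope ring_scope.

(* E[T] = sum_{t>=0} Pr[T > t]; bounding every partial sum by C n^2 means E[T] <= C n^2. *)
Theorem theorem7 (R : realFieldType) (r : R) :
  1 <= r ->
  forall m : measure,
  exists C : R,
    forall n : nat, (0 < n)%N ->
    forall N : nat,
      \sum_(t < N) not_done_prob (score_of r m) n t <= C * (n ^ 2)%N%:R.
Proof.
move=> r1 m; exists 4%:R => n n0 N.
have h1 := @tele R r m n n0 r1 N.
have h2 : 0 <= Sm r m n N by apply: Sm_ge0.
have h3 : Sm r m n 0 <= ((2 * n) * (2 * n))%N%:R by apply: S0_bound.
rewrite -natrM.
have -> : (4 * n ^ 2 = (2 * n) * (2 * n))%N by rewrite expnS expn1; lia.
lra.
Qed.
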